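(* Let $n\ge m\ge 2$ and let $\bm L\in\mathbb{R}^{m\times m}$ be the lower triangular matrix \[ L_{ij}=\begin{cases}\sqrt{\dfrac{m-i}{m-i+1}}, & i=j<m,\\[1ex] -\dfrac{1}{\sqrt{(m-j+1)(m-j)}}, & 1\le j<i\le m,\\[1ex] 0, & \text{otherwise}.\end{cases} \] Then \[ \widetilde{\mathcal O}_{m,n}=\left\{\bm L\bm Q+\frac{1}{\sqrt{mn}}\bm J_{m\times n}\ :\ \bm Q\in\mathbb{R}^{m\times n},\ \bm Q\bm Q^T=\bm I_m,\ \bm Q^T\bm e_m=\bm\xi_n\right\}, \] i.e. the set of matrices of this form where $\bm Q$ has orthonormal rows and last row equal to $\bm\xi_n^T$.
   Context: $\bm 1_k$ denotes the all-ones vector in $\mathbb{R}^k$, $\bm\xi_k=\frac{1}{\sqrt k}\bm 1_k$, $\bm J_{m\times n}$ is the $m\times n$ all-ones matrix, and $\bm e_m$ is the $m$-th standard basis vector of $\mathbb{R}^m$. $\widetilde{\mathcal O}_{m,n}:=\{\bm W\in\mathbb{R}^{m\times n}: \bm W\bm W^T=\bm I_m,\ \bm\xi_m^T\bm W\bm\xi_n=1\}$ (the set of semi-orthogonal $m\times n$ matrices maximizing the sum of all entries). The matrix $\bm L$ is the Cholesky factor of $\bm I_m-\frac1m\bm J_m$. *)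

(* Defs.v *)
From HB Require Import structures.
From mathcomp Require Import all_boot all_order all_algebra.
Set Implicit Arguments. Unset Strict Implicit. Unset Printing Implicit Defensive.
Import Order.TTheory GRing.Theory Num.Theory.
Local Open Scope ring_scope.

Definition xi (R : rcfType) (k : nat) : 'cV[R]_k := const_mx (Num.sqrt (k%:R))^-1.

Definition Jmx (R : rcfType) (m n : nat) : 'M[R]_(m, n) := const_mx 1.

Definition e_last (R : rcfType) (m : nat) : 'cV[R]_m :=
  \col_(i < m) (if (i : nat) == m.-1 then 1 else 0).

Definition Otilde (R : rcfType) (m n : nat) (W : 'M[R]_(m, n)) : Prop :=
  W *m W^T = 1%:M /\ (xi R m)^T *m W *m xi R n = 1%:M.

(* The matrix L, with 0-based indices i, j (1-based i+1, j+1) *)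
Definition Lmx (R : rcfType) (m : nat) : 'M[R]_m :=
  \matrix_(i < m, j < m)
    if (i == j) && (i.+1 < m)%N then
      Num.sqrt ((m - i.+1)%:R / (m - i.+1).+1%:R)
    else if (j < i)%N then
      - (Num.sqrt (((m - j.+1).+1 * (m - j.+1))%:R))^-1
    else 0.

(* Main.v *)
Require Import Defs.
From HB Require Import structures.
From mathcomp Require Import all_boot all_order all_algebra.
From mathcomp Require Import ring lra zify.
Import Order.TTheory GRing.Theory Num.Theory.
Local Open Scope ring_scope.

Section Alg.
Variable R : rcfType.

Lemma sq_alt (k : nat) :
  Num.sqrt ((k%:R : R) / k.+1%:R) = k%:R / Num.sqrt ((k.+1 * k)%:R).
Proof.
have s0 : 0 <= Num.sqrt ((k.+1 * k)%:R : R) by apply: sqrtr_ge0.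
have t0 : 0 <= (k%:R : R) / Num.sqrt ((k.+1 * k)%:R) by apply: divr_ge0.
rewrite -[RHS]ger0_norm // -sqrtr_sqr; congr Num.sqrt.
rewrite expr_div_n sqr_sqrtr ?ler0n //.
case: k {s0 t0} => [|k]; first by rewrite expr0n !mul0r.
rewrite natrM; field.
have hk : (0:R) <= k%:R := ler0n _ _.
by apply/andP; split; apply/negP => /eqP; lra.
Qed.

Lemma ab0 (k : nat) :
  Num.sqrt ((k%:R : R) / k.+1%:R) + k%:R * - (Num.sqrt ((k.+1 * k)%:R))^-1 = 0.
Proof. by rewrite sq_alt mulrN subrr. Qed.

Lemma ab1 (k : nat) : (0 < k)%N ->
  Num.sqrt ((k%:R : R) / k.+1%:R) ^+ 2 + k%:R * (- (Num.sqrt ((k.+1 * k)%:R))^-1) ^+ 2 = 1.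
Proof.
move=> k0.
rewrite sqr_sqrtr ?divr_ge0 ?ler0n // sqrrN exprVn sqr_sqrtr ?ler0n //.
rewrite natrM; field.
have hk : (0:R) < k%:R by rewrite ltr0n.
by apply/andP; split; apply/negP => /eqP; lra.
Qed.
End Alg.
Lemma sum_pat (R : rcfType) (m : nat) (j : 'I_m) (x y : R) :
  \sum_(i < m) (if (i < j)%N then 0 else if (i : nat) == j then x else y)
  = x + (m - j.+1)%:R * y.
Proof.
pose F (i : nat) := if (i < j)%N then 0 else if i == j :> nat then x else y.
rewrite (eq_bigr (fun i : 'I_m => F i)) // -(big_mkord xpredT F).
have jm : (j < m)%N := ltn_ord j.
rewrite (big_cat_nat _ (n := j)) ?leq0n 1?ltnW //=.
rewrite big1_seq ?add0r; last first.
  by move=> i; rewrite mem_iota /= add0n subn0 => ij; rewrite /F ij.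
rewrite big_ltn // {1}/F ltnn eqxx; congr (_ + _).
rewrite big_nat (eq_bigr (fun _ => y)); last first.
  by move=> i /andP[ji _]; rewrite /F ltnNge (ltnW ji) /= gtn_eqF.
by rewrite -big_nat sumr_const_nat mulr_natl.
Qed.

Definition ca (R : rcfType) (k : nat) : R := Num.sqrt (k%:R / k.+1%:R).
Definition cb (R : rcfType) (k : nat) : R := - (Num.sqrt ((k.+1 * k)%:R))^-1.
Definition cc (R : rcfType) (m : nat) : R := (Num.sqrt (m%:R))^-1.
Definition Mmx (R : rcfType) (m : nat) : 'M[R]_m :=
  Lmx R m + cc R m *: (const_mx 1 *m (e_last R m)^T).

Lemma Mij (R : rcfType) (m : nat) (i j : 'I_m) :
  Mmx R m i j = if (j : nat) == m.-1 then cc R m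
                else if (i < j)%N then 0
                else if (i : nat) == j then ca R (m - j.+1) else cb R (m - j.+1).
Proof.
have im := ltn_ord i; have jm := ltn_ord j.
rewrite !mxE big_ord1 !mxE mul1r.
have [jl|jl] := eqVneq (j : nat) m.-1.
  rewrite mulr1.
  have -> : (i == j) && (i.+1 < m)%N = false.
    by apply/negbTE; apply/negP => /andP[/eqP /(congr1 val) /= ij]; lia.
  have -> : (j < i)%N = false by apply/negbTE; lia.
  by rewrite add0r.
rewrite mulr0 addr0.
case: (ltngtP i j) => ij.
- by have -> : (i == j) = false by apply/negbTE; rewrite neq_ltn ij.
- by have -> : (i == j) = false by apply/negbTE; rewrite neq_ltn ij orbT.
- have -> : i == j by apply/eqP/val_inj.
  have -> : (i.+1 < m)%N by move: jl; rewrite ij; lia.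
  by rewrite /ca ij.
Qed.

Lemma sum_pat_mul (R : rcfType) (m : nat) (j : 'I_m) (x y z : R) :
  \sum_(i < m) (if (i < j)%N then 0 else if (i : nat) == j then x else y) * z
  = (x + (m - j.+1)%:R * y) * z.
Proof. by rewrite -mulr_suml sum_pat. Qed.

Lemma key (R : rcfType) (m : nat) (j j' : 'I_m) : (j <= j')%N ->
  \sum_(i < m) Mmx R m i j * Mmx R m i j' = (j == j')%:R.
Proof.
move=> jj.
have jm := ltn_ord j; have jm' := ltn_ord j'.
under eq_bigr do rewrite !Mij.
have [jl'|jl'] := eqVneq (j' : nat) m.-1.
  have [jl|jl] := eqVneq (j : nat) m.-1.
    have -> : j == j' by apply/eqP/val_inj; rewrite /= jl jl'.
    rewrite sumr_const card_ord /cc -invfM -expr2 sqr_sqrtr ?ler0n //.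
    by rewrite -[_ *+ m]mulr_natr mulVf // pnatr_eq0 -lt0n (leq_ltn_trans (leq0n j) jm).
  have -> : (j == j') = false by apply/negbTE; apply/eqP => /(congr1 val) /= e; move/eqP: jl; lia.
  rewrite sum_pat_mul.
  by rewrite /ca /cb ab0 mul0r.
have jl : (j : nat) != m.-1 by lia.
rewrite (negbTE jl).
have [e|ne] := eqVneq j j'.
  rewrite -e.
  rewrite (eq_bigr (fun i : 'I_m => if (i < j)%N then 0 else if (i : nat) == j
      then ca R (m - j.+1) ^+ 2 else cb R (m - j.+1) ^+ 2)); last first.
    by move=> i _; case: ifP => _; [rewrite mul0r | case: ifP => _; rewrite expr2].
  by rewrite sum_pat /ca /cb ab1 //; lia.
have ljj : (j < j')%N by rewrite ltn_neqAle jj andbT; exact: ne.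
rewrite (eq_bigr (fun i : 'I_m => if (i < j')%N then 0 else if (i : nat) == j'
      then cb R (m - j.+1) * ca R (m - j'.+1) else cb R (m - j.+1) * cb R (m - j'.+1))); last first.
  move=> i _; case: (ltngtP i j') => h.
  - by rewrite mulr0.
  - have -> : (i < j)%N = false by apply/negbTE; lia.
    by have -> : ((i : nat) == j) = false by apply/negbTE; lia.
  - have -> : (i < j)%N = false by apply/negbTE; lia.
    by have -> : ((i : nat) == j) = false by apply/negbTE; lia.
by rewrite sum_pat mulrCA -mulrDr /ca /cb ab0 mulr0.
Qed.

Lemma MtM (R : rcfType) (m : nat) : (Mmx R m)^T *m Mmx R m = 1%:M.
Proof.
apply/matrixP => j j'; rewrite !mxE.
under eq_bigr do rewrite mxE.
case: (leqP j j') => h; first exact: key.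
rewrite eq_sym -key ?(ltnW h) //.
by apply: eq_bigr => i _; rewrite mulrC.
Qed.

Lemma MMt (R : rcfType) (m : nat) : Mmx R m *m (Mmx R m)^T = 1%:M.
Proof. exact/mulmx1C/MtM. Qed.

Lemma ccsq (R : rcfType) (k : nat) : (0 < k)%N ->
  (Num.sqrt (k%:R : R))^-1 * (Num.sqrt (k%:R : R))^-1 *+ k = 1.
Proof.
move=> k0; rewrite -invfM -expr2 sqr_sqrtr ?ler0n //.
by rewrite -mulr_natr mulVf // pnatr_eq0 -lt0n.
Qed.

Lemma xixi (R : rcfType) (k : nat) : (0 < k)%N -> (xi R k)^T *m xi R k = 1%:M.
Proof.
move=> k0; apply/matrixP => i j; rewrite !ord1 !mxE.
under eq_bigr do rewrite !mxE.
by rewrite sumr_const card_ord ccsq.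
Qed.

Lemma sq0 (R : rcfType) (n : nat) (x : 'cV[R]_n) : x^T *m x = 0 -> x = 0.
Proof.
move=> /matrixP /(_ 0 0); rewrite !mxE => h.
apply/matrixP => i k; rewrite ord1 mxE.
have h' : \sum_(j | true) x j 0 * x j 0 = 0.
  by rewrite -[RHS]h; apply: eq_bigr => j _; rewrite !mxE.
have := psumr_eq0P (fun j _ => sqr_ge0 (x j 0)) h'; move/(_ i isT).
by move/eqP; rewrite mulf_eq0 orbb => /eqP.
Qed.

Lemma Me (R : rcfType) (m : nat) : (0 < m)%N -> Mmx R m *m e_last R m = xi R m.
Proof.
move=> m0; have lm : (m.-1 < m)%N by rewrite prednK.
apply/matrixP => i k; rewrite ord1 !mxE (bigD1 (Ordinal lm)) //= big1.
  by rewrite Mij /= eqxx mxE /= eqxx mulr1 addr0.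
move=> j /eqP nj; rewrite [e_last _ _ _ _]mxE.
have -> : ((j : nat) == m.-1) = false by apply/negbTE/eqP => e; apply: nj; apply: val_inj.
by rewrite mulr0.
Qed.

Lemma eQ (R : rcfType) (m n : nat) (Q : 'M[R]_(m, n)) :
  Q^T *m e_last R m = xi R n -> (e_last R m)^T *m Q = (xi R n)^T.
Proof. by move=> h; rewrite -h trmx_mul trmxK. Qed.

Lemma MQ (R : rcfType) (m n : nat) (Q : 'M[R]_(m, n)) :
  Q^T *m e_last R m = xi R n ->
  Mmx R m *m Q = Lmx R m *m Q + (Num.sqrt ((m * n)%:R))^-1 *: Jmx R m n.
Proof.
move=> h; rewrite /Mmx mulmxDl -scalemxAl -mulmxA eQ //; congr (_ + _).
apply/matrixP => i j; rewrite !mxE big_ord1 !mxE.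
by rewrite mul1r mulr1 /cc natrM sqrtrM ?ler0n // invfM.
Qed.

Lemma cs (R : rcfType) (n : nat) (u v : 'cV[R]_n) :
  u^T *m u = 1%:M -> v^T *m v = 1%:M -> u^T *m v = 1%:M -> u = v.
Proof.
move=> hu hv huv; apply/eqP; rewrite -subr_eq0; apply/eqP/sq0.
have hvu : v^T *m u = 1%:M by rewrite -[u]trmxK -trmx_mul huv trmx1.
rewrite [(u - v)^T]raddfB /= mulmxDl mulNmx !mulmxDr !mulmxN hu hv huv hvu.
by rewrite subrr.
Qed.

Theorem theorem2 (R : rcfType) (m n : nat) (hm : (2 <= m)%N) (hmn : (m <= n)%N)
    (W : 'M[R]_(m, n)) :
  Otilde W <->
  exists Q : 'M[R]_(m, n),
    [/\ Q *m Q^T = 1%:M, Q^T *m e_last R m = xi R n &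
        W = Lmx R m *m Q + (Num.sqrt ((m * n)%:R))^-1 *: Jmx R m n].
Proof.
have m0 : (0 < m)%N by lia.
have n0 : (0 < n)%N by lia.
have hMe := @Me R m m0.
have hMtxi : (Mmx R m)^T *m xi R m = e_last R m by rewrite -hMe mulmxA MtM mul1mx.
have hxiM : (xi R m)^T *m Mmx R m = (e_last R m)^T by rewrite -hMtxi trmx_mul trmxK.
split.
  move=> [hWW hxi].
  have hWxi : W^T *m xi R m = xi R n.
    apply: cs; last 2 first.
    - exact: xixi.
    - by rewrite trmx_mul trmxK.
    by rewrite trmx_mul trmxK mulmxA -(mulmxA _ W) hWW mulmx1 xixi.
  have hQe : ((Mmx R m)^T *m W)^T *m e_last R m = xi R n.
    by rewrite trmx_mul trmxK -mulmxA hMe.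
  exists ((Mmx R m)^T *m W); split => //.
  - rewrite trmx_mul trmxK mulmxA -(mulmxA _ W) hWW mulmx1 MtM //.
  - by rewrite -MQ // mulmxA MMt mul1mx.
move=> [Q [hQQ hQe ->]].
rewrite -MQ //; split.
  by rewrite trmx_mul mulmxA -(mulmxA _ Q) hQQ mulmx1 MMt.
by rewrite mulmxA hxiM eQ // xixi.
Qed.
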